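(* Let $u$ be a coherent utility on $L^0$ with determining set $\mathcal{D}$, $\rho=-u$, and let $Y^1,\dots,Y^M$ be independent random variables (or random vectors); write $Y=(Y^1,\dots,Y^M)$. Let $X=\sum_{m=1}^MX^m$, where each $X^m$ is $\sigma(Y^m)$-measurable, $X^m\in L^1_s(\mathcal{D})\cap L^1_s(\mathsf{E}(\mathcal{D}\mid Y))\cap L^1$, and $\mathsf{E}X^m=0$. Then $$\rho^f(X;Y^1,\dots,Y^M)\le\sum_{m=1}^M\rho^f(X;Y^m).$$
   Context: Let $(\Omega,\mathcal{F},\mathsf{P})$ be a probability space, $L^0$ the space of all real random variables, $L^1=L^1(\mathsf{P})$, and $\mathcal{P}$ the set of probability measures on $\mathcal{F}$ absolutely continuous with respect to $\mathsf{P}$; measures $\mathsf{Q}\in\mathcal{P}$ are identified with their densities. For $\mathsf{Q}\in\mathcal{P}$ and $X\in L^0$, $\mathsf{E}_\mathsf{Q}X:=\mathsf{E}_\mathsf{Q}X^+-\mathsf{E}_\mathsf{Q}X^-$ with the convention $\infty-\infty=-\infty$; $\mathsf{E}$ is expectation under $\mathsf{P}$. A coherent utility on $L^0$ is a map $u:L^0\to[-\infty,\infty]$ of the form $u(X)=\inf_{\mathsf{Q}\in\mathcal{D}}\mathsf{E}_\mathsf{Q}X$ for a nonempty $\mathcal{D}\subseteq\mathcal{P}$; its determining set is the largest such set, $\{\mathsf{Q}\in\mathcal{P}:\mathsf{E}_\mathsf{Q}X\ge u(X)\ \forall X\in L^0\}$. For $\mathcal{C}\subseteq\mathcal{P}$,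 $L^1_s(\mathcal{C})=\{X\in L^0:\lim_{n\to\infty}\sup_{\mathsf{Q}\in\mathcal{C}}\mathsf{E}_\mathsf{Q}|X|I(|X|>n)=0\}$. For a random vector $V$, $\mathsf{E}(\mathcal{D}\mid V):=\{\mathsf{E}(Z\mid V):Z\in\mathcal{D}\}$, the factor utility is $u^f(X;V):=\inf_{\mathsf{Q}\in\mathsf{E}(\mathcal{D}\mid V)}\mathsf{E}_\mathsf{Q}X$, and the factor risk is $\rho^f(X;V):=-u^f(X;V)$; $\rho^f(X;Y^1,\dots,Y^M)$ means $\rho^f(X;(Y^1,\dots,Y^M))$. *)

(* Defs.v *)
From HB Require Import structures.
From mathcomp Require Import all_boot all_order all_algebra.
From mathcomp Require Import all_classical all_reals all_analysis.
Set Implicit Arguments. Unset Strict Implicit. Unset Printing Implicit Defensive.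
Import Order.TTheory GRing.Theory Num.Theory.
Import numFieldNormedType.Exports.
Local Open Scope classical_set_scope.
Local Open Scope ring_scope.
Local Open Scope ereal_scope.

Section Defs.
Context {d : measure_display} {Omega : measurableType d} {R : realType}.
Variable P : probability Omega R.

Definition L0 (X : Omega -> R) : Prop := measurable_fun setT X.

(* Elements of \mathcal P, identified with their densities dQ/dP. *)
Definition density (Z : Omega -> R) : Prop :=
  [/\ measurable_fun setT Z, (forall w, (0 <= Z w)%R)
    & \int[P]_w (Z w)%:E = 1].

(* E_Q X := E_Q X^+ - E_Q X^-, with the convention oo - oo = -oo
   (explicit below). *)
Definition EQ (Z X : Omega -> R) : \bar R :=
  let a := \int[P]_w (Z w * Num.max (X w) 0%R)%:E in
  let b := \int[P]_w (Z w * Num.max (- X w) 0%R)%:E in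
  if (a == +oo) && (b == +oo) then -oo else a - b.

Definition coherent_utility (u : (Omega -> R) -> \bar R) : Prop :=
  exists D0 : set (Omega -> R), [/\ D0 !=set0, D0 `<=` density &
    forall X, L0 X -> u X = ereal_inf [set EQ Z X | Z in D0]].

Definition determining_set (u : (Omega -> R) -> \bar R) : set (Omega -> R) :=
  [set Z | density Z /\ forall X, L0 X -> u X <= EQ Z X].

Definition L1s (C : set (Omega -> R)) (X : Omega -> R) : Prop :=
  L0 X /\
  (fun n : nat => ereal_sup
     [set \int[P]_w (Z w * `|X w| * (\1_[set w' | (n%:R < `|X w'|)%R] w))%:E
       | Z in C]) @ \oo --> (0 : \bar R).

Definition sigma_of {dT} {T : measurableType dT} (V : Omega -> T)
  : set (set Omega) := preimage_set_system setT V measurable.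

Definition sigma_joint {M : nat} {dT : 'I_M -> measure_display}
  {T : forall m, measurableType (dT m)} (Y : forall m, Omega -> T m)
  : set (set Omega) :=
  <<s setT, \bigcup_(m in [set: 'I_M]) sigma_of (Y m) >>.

Definition measurable_wrt (G : set (set Omega)) (W : Omega -> R) : Prop :=
  forall B : set R, measurable B -> G (W @^-1` B).

Definition cond_exp_version (G : set (set Omega)) (Z W : Omega -> R) : Prop :=
  [/\ measurable_wrt G W, P.-integrable setT (EFin \o W) &
    forall A, G A -> \int[P]_(w in A) (W w)%:E = \int[P]_(w in A) (Z w)%:E].

Definition cond_set (D : set (Omega -> R)) (G : set (set Omega))
  : set (Omega -> R) :=
  [set W | density W /\ exists2 Z, D Z & cond_exp_version G Z W].

Definition u_f (D : set (Omega -> R)) (X : Omega -> R) (G : set (set Omega))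
  : \bar R := ereal_inf [set EQ W X | W in cond_set D G].
Definition rho_f D X G : \bar R := - u_f D X G.

Definition independent {M : nat} {dT : 'I_M -> measure_display}
  {T : forall m, measurableType (dT m)} (Y : forall m, Omega -> T m) : Prop :=
  forall B : forall m, set (T m), (forall m, measurable (B m)) ->
    P (\bigcap_(m in [set: 'I_M]) (Y m @^-1` B m)) =
    \prod_(m < M) P (Y m @^-1` B m).

End Defs.

(* Main.v *)
Require Import Defs.
From HB Require Import structures.
From mathcomp Require Import all_boot all_order all_algebra.
From mathcomp Require Import all_classical all_reals all_analysis.
From mathcomp Require Import measurable_realfun.
Import Order.TTheory GRing.Theory Num.Theory.
Import numFieldNormedType.Exports.
Local Open Scope classical_set_scope.
Local Open Scope ring_scope.
Local Open Scope ereal_scope.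


Section dens.
Context d (T : measurableType d) (R : realType) (mu : {measure set T -> \bar R}).
Variables (f : T -> R) (mf : measurable_fun setT f) (f0 : forall x, (0 <= f x)%R).

Definition dmeas (_ : measurable_fun setT f) (_ : forall x, (0 <= f x)%R) (A : set T) : \bar R := \int[mu]_(x in A) (f x)%:E.
Local Notation dm := (dmeas mf f0).

Let dmeas0 : dm set0 = 0. Proof. by rewrite /dmeas integral_set0. Qed.
Let dmeas_ge0 A : 0 <= dm A.
Proof. by apply: integral_ge0 => x _; rewrite lee_fin. Qed.
Let dmeas_sigma : semi_sigma_additive dm.
Proof.
apply: semi_sigma_additive_nng_induced; first exact/measurable_EFinP.
by move=> x; rewrite lee_fin.
Qed.

HB.instance Definition _ := isMeasure.Build _ _ _ dm dmeas0 dmeas_ge0 dmeas_sigma.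


Import HBNNSimple.

Lemma dmeas_integral (h : T -> \bar R) E : (forall x, 0 <= h x) ->
    measurable E -> measurable_fun E h ->
  \int[dm]_(x in E) h x = \int[mu]_(x in E) ((f x)%:E * h x).
Proof.
move=> h0 mE mh; set g := EFin \o f.
pose hn := nnsfun_approx mE mh.
have -> : \int[dm]_(x in E) h x =
    lim (\int[dm]_(x in E) (EFin \o hn n) x @[n --> \oo]).
  have hE x : E x -> h x = lim ((EFin \o hn n) x @[n --> \oo]).
    by move=> Ex; apply/esym/cvg_lim => //; exact: cvg_nnsfun_approx.
  under eq_integral => x /[!inE] /hE -> //.
  apply: monotone_convergence => //.
  - move=> n; apply/measurable_EFinP.
    by apply: (measurable_funS measurableT) => //; exact/measurable_funP.
  - by move=> n x Ex //=; rewrite lee_fin.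
  - by move=> x Ex a b ab; rewrite lee_fin; exact/lefP/nd_nnsfun_approx.
have -> : \int[mu]_(x in E) (g x * h x) =
    lim (\int[mu]_(x in E) (g x * (EFin \o hn n) x) @[n --> \oo]).
  have fg x : E x -> g x * h x = lim ((g x * (EFin \o hn n) x) @[n --> \oo]).
    by move=> Ex; apply/esym/cvg_lim => //; apply: cvgeZl => //;
      exact: cvg_nnsfun_approx.
  under eq_integral => x /[!inE] /fg -> //.
  apply: monotone_convergence => [//| | |].
  - move=> n; apply/emeasurable_funM; apply/measurable_funTS.
      exact/measurable_EFinP.
    exact/measurable_EFinP/measurable_funP.
  - by move=> n x Ex /=; rewrite mule_ge0 ?lee_fin.
  - by move=> x Ex a b ab/=; rewrite lee_wpmul2l ?lee_fin//; exact/lefP/nd_nnsfun_approx.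
suff suf n : \int[mu]_(x in E) (g x * (EFin \o hn n) x) =
    \int[dm]_(x in E) (EFin \o hn n) x.
  by congr (limn _); apply: funext => n; rewrite suf.
transitivity (\int[dm]_(x in E)
   (\sum_(y \in range (hn n)) (y * \1_(hn n @^-1` [set y]) x)%:E)); last first.
  by apply: eq_integral => t tE; rewrite /= fimfunE -fsumEFin.
have indich m r : measurable_fun E (fun x => (r * \1_(hn m @^-1` [set r]) x)%:E).
  by apply: (measurable_comp measurableT) => //; exact: measurable_funM.
rewrite ge0_integral_fsum//; last by move=> m y Ey; exact: nnfun_muleindic_ge0.
transitivity (\int[mu]_(x in E) (\sum_(y \in range (hn n))
    g x * (y * \1_(hn n @^-1` [set y]) x)%:E)).
  under [RHS]eq_integral => x xE.
    rewrite -ge0_mule_fsumr => [|y]; last exact: nnfun_muleindic_ge0.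
    rewrite fsumEFin // -(fimfunE _ x); over.
  by [].
rewrite ge0_integral_fsum//; last 2 first.
  - move=> y; apply: emeasurable_funM => //; apply: measurable_funTS.
    exact/measurable_EFinP.
  - by move=> m y Ey; apply: mule_ge0; [rewrite lee_fin | rewrite EFinM nnfun_muleindic_ge0].
apply: eq_fsbigr => r rhn.
rewrite integralZl_indic_nnsfun => //.
under eq_integral do rewrite EFinM muleCA.
rewrite ge0_integralZl//.
- rewrite (eq_integral (g \_ (hn n @^-1` [set r]))); last first.
    by move=> x xE; rewrite epatch_indic muleC.
  rewrite -integral_mkcondr integral_indic// setIC /dmeas /=.
  by rewrite setIC.
  apply: emeasurable_funM; first exact/measurable_funTS/measurable_EFinP.
  apply/measurable_EFinP/measurable_funTS/measurable_indic.
  by rewrite -[X in measurable X]setTI; exact: measurable_funP.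
- by move=> t Et; rewrite mule_ge0 ?lee_fin.
- by move: rhn; rewrite inE => -[t _ <-]; rewrite lee_fin.
Qed.

End dens.

Section subsigma.
Context d (T : measurableType d) (R : realType) (mu : {measure set T -> \bar R}).

Lemma sub_integral (G : set (set T)) (sG : sigma_algebra setT G)
  (GM : G `<=` measurable) (f g : T -> R)
  (mf : measurable_fun setT f) (mg : measurable_fun setT g)
  (f0 : forall x, (0 <= f x)%R) (g0 : forall x, (0 <= g x)%R)
  (hfg : forall A, G A ->
     \int[mu]_(x in A) (f x)%:E = \int[mu]_(x in A) (g x)%:E)
  (h : T -> R) (hG : forall B, measurable B -> G (h @^-1` B))
  (h0 : forall x, (0 <= h x)%R) :
  \int[mu]_x (f x * h x)%:E = \int[mu]_x (g x * h x)%:E.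
Proof.
have mh : measurable_fun setT h.
  by move=> _ B mB; rewrite setTI; apply: GM; exact: hG.
have E1 (k : T -> R) (mk : measurable_fun setT k) (k0 : forall x, (0 <= k x)%R) :
    \int[mu]_x (k x * h x)%:E = \int[@dmeas _ _ _ mu k mk k0]_x (h x)%:E.
  by rewrite dmeas_integral//; exact/measurable_EFinP.
pose T' := g_sigma_algebraType G.
pose phi := (fun x : T => (x : T')).
have mphi : measurable_fun setT phi.
  move=> _ B mB; rewrite setTI.
  have : <<s G >> B by exact: mB.
  by rewrite sigma_algebra_id// => /GM.
have mh' : measurable_fun (setT : set T') (EFin \o (h : T' -> R)).
  apply/measurable_EFinP => _ B mB; rewrite setTI.
  by apply: sub_gen_smallest; exact: hG.
have E2 (k : T -> R) (mk : measurable_fun setT k) (k0 : forall x, (0 <= k x)%R) :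
    \int[@dmeas _ _ _ mu k mk k0]_x (h x)%:E =
    \int[pushforward (@dmeas _ _ _ mu k mk k0) phi]_(y in setT) (h y)%:E.
  rewrite (ge0_integral_pushforward mphi)//.
  by move=> y _; rewrite lee_fin.
rewrite E1 E2 E1 E2.
apply: eq_measure_integral => A mA _.
rewrite /pushforward /dmeas /=.
apply: hfg.
have : <<s G >> A by exact: mA.
by rewrite sigma_algebra_id.
Qed.

End subsigma.


Section indep.
Context d (Om : measurableType d) (R : realType) (P : probability Om R)
  (M : nat) (dT : 'I_M -> measure_display)
  (T : forall m, measurableType (dT m)) (Y : forall m, Om -> T m).

Definition tr (m : 'I_M) (Bm : set (T m)) (j : 'I_M) : set (T j) :=
  match pselect (m = j) with
  | left e => eq_rect m (fun i => set (T i)) Bm j e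
  | right _ => setT end.
Arguments tr {m} Bm j.

Lemma tr_id m (Bm : set (T m)) : tr Bm m = Bm.
Proof.
rewrite /tr; case: pselect => // e.
by have -> : e = erefl by apply: eq_irrelevance.
Qed.

Lemma tr_ne m (Bm : set (T m)) j : m <> j -> tr Bm j = setT.
Proof. by rewrite /tr; case: pselect. Qed.
Arguments tr_ne {m Bm j}.

Lemma tr_meas m (Bm : set (T m)) j : measurable Bm -> measurable (tr Bm j).
Proof.
rewrite /tr; case: pselect => // e; by case: _ / e.
Qed.

Lemma indep2 (hI : independent P Y) m k (mk : m <> k) (Bm : set (T m)) (Bk : set (T k)) :
  measurable Bm -> measurable Bk ->
  P (Y m @^-1` Bm `&` Y k @^-1` Bk) = P (Y m @^-1` Bm) * P (Y k @^-1` Bk).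
Proof.
move=> mBm mBk.
pose B j := tr Bm j `&` tr Bk j.
have mB j : measurable (B j) by apply: measurableI; exact: tr_meas.
have := hI B mB.
have -> : \bigcap_(j in [set: 'I_M]) (Y j @^-1` B j) =
    Y m @^-1` Bm `&` Y k @^-1` Bk.
  apply/seteqP; split => [w /= hw|w /= [hm hk] j _].
    have [+ _] := hw m I; have [_ +] := hw k I.
    by rewrite !tr_id => ? ?; split.
  rewrite /B /=.
  have [<-|jm] := pselect (m = j).
    by rewrite tr_id (tr_ne (nesym mk)).
  have [<-|jk] := pselect (k = j).
    by rewrite tr_id (tr_ne mk).
  by rewrite (tr_ne jm) (tr_ne jk).
move=> ->.
rewrite (bigD1 m)//= (bigD1 k) /=; last by apply/eqP => /esym.
rewrite big1 ?mule1.
  have -> : B m = Bm by rewrite /B tr_id (tr_ne (nesym mk)) setIT.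
  by rewrite /B /= tr_id (tr_ne mk) setTI.
move=> j /andP[/eqP jm /eqP jk].
rewrite /B /= (tr_ne (nesym jm)) (tr_ne (nesym jk)) setIT preimage_setT.
exact: probability_setT.
Qed.

End indep.


Section main.
Context d (Om : measurableType d) (R : realType) (P : probability Om R)
  (M : nat) (dT : 'I_M -> measure_display)
  (T : forall m, measurableType (dT m)) (Y : forall m, Om -> T m)
  (mY : forall m, measurable_fun setT (Y m)) (hI : independent P Y).

Lemma sa_of m : sigma_algebra setT (sigma_of (Y m)).
Proof. apply: sigma_algebra_preimage; exact: sigma_algebra_measurable. Qed.

Lemma sub_of m : sigma_of (Y m) `<=` measurable.
Proof. by move=> _ [B mB <-]; exact: mY. Qed.

Lemma mwrt_meas G (h : Om -> R) : G `<=` measurable -> measurable_wrt G h ->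
  measurable_fun setT h.
Proof. by move=> GM hG _ B mB; rewrite setTI; apply: GM; exact: hG. Qed.
Arguments mwrt_meas {G h}.

Lemma I1 m k (mk : m <> k) A (hA : sigma_of (Y m) A) (h : Om -> R)
  (hG : measurable_wrt (sigma_of (Y k)) h) (h0 : forall x, (0 <= h x)%R) :
  \int[P]_x (\1_A x * h x)%:E = P A * \int[P]_x (h x)%:E.
Proof.
have mA : measurable A by exact: sub_of hA.
have mh := mwrt_meas (@sub_of k) hG.
have PAfin : P A \is a fin_num by exact: fin_num_measure.
rewrite (@sub_integral _ _ _ P (sigma_of (Y k)) (sa_of k) (@sub_of k) (\1_A)
   (cst (fine (P A)))).
- under eq_integral do rewrite EFinM.
  rewrite ge0_integralZl_EFin //=.
  + by rewrite fineK.
  + by move=> x _; rewrite lee_fin.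
  + exact/measurable_EFinP.
  + by rewrite fine_ge0.
- exact: measurable_indic.
- exact: measurable_cst.
- by move=> x; rewrite indicE.
- by move=> x; rewrite /= fine_ge0.
- move=> C hC; have mC : measurable C by exact: sub_of hC.
  rewrite integral_indic// (integral_cst P mC (fine (P A))%:E) fineK//.
  case: hA => Bm mBm <-; case: hC => Bk mBk <-; rewrite !setTI.
  exact: indep2.
- exact: hG.
- exact: h0.
Qed.


Lemma I2 m k (mk : m <> k) (f h : Om -> R)
  (fG : measurable_wrt (sigma_of (Y m)) f) (f0 : forall x, (0 <= f x)%R)
  (hG : measurable_wrt (sigma_of (Y k)) h) (h0 : forall x, (0 <= h x)%R)
  (c : R) (hc : \int[P]_x (h x)%:E = c%:E) :
  \int[P]_x (f x * h x)%:E = c%:E * \int[P]_x (f x)%:E.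
Proof.
have mf := mwrt_meas (@sub_of m) fG.
have mh := mwrt_meas (@sub_of k) hG.
have c0 : (0 <= c)%R.
  by rewrite -lee_fin -hc; apply: integral_ge0 => x _; rewrite lee_fin.
under eq_integral do rewrite mulrC.
rewrite (@sub_integral _ _ _ P (sigma_of (Y m)) (sa_of m) (@sub_of m) h
   (cst c)).
- under eq_integral do rewrite EFinM.
  rewrite ge0_integralZl_EFin //=.
  + by move=> x _; rewrite lee_fin.
  + exact/measurable_EFinP.
- exact: mh.
- exact: measurable_cst.
- exact: h0.
- by move=> x.
- move=> A hA; have mA : measurable A by exact: sub_of hA.
  rewrite (integral_cst P mA c%:E) integral_mkcond epatch_indic.
  transitivity (\int[P]_x (\1_A x * h x)%:E).
    by apply: eq_integral => x _; rewrite /= EFinM muleC.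
  by rewrite (@I1 _ _ mk _ hA _ hG h0) hc muleC.
- exact: fG.
- exact: f0.
Qed.

End main.


Section pfm.
Context d d' (T : measurableType d) (T' : measurableType d') (R : realType)
  (mu : {finite_measure set T -> \bar R}) (f : T -> T')
  (mf : measurable_fun setT f).

Definition pfm (_ : measurable_fun setT f) := pushforward mu f.

Let pfm0 : pfm mf set0 = 0.
Proof. by rewrite /pfm /pushforward preimage_set0 measure0. Qed.
Let pfm_ge0 A : 0 <= pfm mf A.
Proof. exact: measure_ge0. Qed.
Let pfm_sigma : semi_sigma_additive (pfm mf).
Proof.
move=> F mF tF mUF; rewrite /pfm /pushforward preimage_bigcup.
apply: measure_semi_sigma_additive.
- by move=> n; rewrite -[X in measurable X]setTI; exact: mf.
- apply/trivIsetP => /= i j _ _ ij; rewrite -preimage_setI.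
  by move/trivIsetP : tF => /(_ _ _ _ _ ij) ->//; rewrite preimage_set0.
- by rewrite -preimage_bigcup -[X in measurable X]setTI; exact: mf.
Qed.
HB.instance Definition _ := isMeasure.Build _ _ _ (pfm mf) pfm0 pfm_ge0 pfm_sigma.
Let pfm_fin : fin_num_fun (pfm mf).
Proof.
move=> U mU; rewrite /pfm /pushforward; apply: fin_num_measure.
by rewrite -[X in measurable X]setTI; exact: mf.
Qed.
HB.instance Definition _ := Measure_isFinite.Build _ _ _ (pfm mf) pfm_fin.
End pfm.
Arguments pfm {d d' T T' R} mu {f}.

Section cexp.
Context d (Om : measurableType d) (R : realType) (P : probability Om R)
  d' (T : measurableType d') (Y : Om -> T) (mY : measurable_fun setT Y).

Lemma cexp (Z : Om -> R) (mZ : measurable_fun setT Z)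
  (Z0 : forall x, (0 <= Z x)%R) (iZ : \int[P]_x (Z x)%:E < +oo) :
  exists W : Om -> R, [/\ measurable_wrt (sigma_of Y) W, (forall x, (0 <= W x)%R) &
    forall A, sigma_of Y A -> \int[P]_(x in A) (W x)%:E = \int[P]_(x in A) (Z x)%:E].
Proof.
pose mu := pfm P mY.
have dfin : @dmeas _ _ _ P Z mZ Z0 setT < +oo by [].
pose nu0 : {finite_measure set Om -> \bar R} := mfrestr measurableT dfin.
pose nu := pfm nu0 mY.
have numu : nu `<< mu.
  move=> N hN A mA AN.
  have PA0 : P (Y @^-1` A) = 0 by exact: (hN A mA AN).
  rewrite /nu /pfm /pushforward /nu0 /= /mfrestr /mrestr setIT /dmeas.
  apply: null_set_integral => //.
  - by rewrite -[X in measurable X]setTI; exact: mY.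
  - by apply/measurable_EFinP; exact: measurable_funTS.
have [g [g0 gfin gint gE]] := radon_nikodym_sigma_finite numu.
have mg : measurable_fun setT g := measurable_int _ gint.
pose W := fun w => fine (g (Y w)).
exists W; split.
- move=> B mB; exists ((fine \o g) @^-1` B); last by rewrite setTI.
  rewrite -[X in measurable X]setTI; apply: measurableT_comp => //.
- by move=> x; rewrite /W fine_ge0.
- move=> _ [B mB <-]; rewrite setTI.
  have := gE B mB.
  rewrite /nu /pfm /pushforward /nu0 /= /mfrestr /mrestr setIT /dmeas => ->.
  have -> : \int[pfm P mY]_(x in B) g x =
      \int[pfm P mY]_(x in B) (EFin \o (fine \o g)) x.
    by apply: eq_integral => x _; rewrite /= fineK.
  symmetry.
  apply: (@ge0_integral_pushforward _ _ _ _ _ Y mY P B (EFin \o (fine \o g))) => //.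
  + apply/measurable_EFinP; apply: measurableT_comp => //; exact: measurable_funTS.
  + by move=> x _; rewrite lee_fin fine_ge0.
Qed.

End cexp.


Section tools.
Context d (T : measurableType d) (R : realType) (mu : {measure set T -> \bar R}).

Lemma int_split (V h : T -> R) (mV : measurable_fun setT V)
  (mh : measurable_fun setT h) (V0 : forall x, (0 <= V x)%R)
  (hfin : \int[mu]_x (V x * `|h x|)%R%:E < +oo) :
  [/\ mu.-integrable setT (EFin \o (fun x => V x * h x)%R),
    \int[mu]_x (V x * Num.max (h x) 0)%R%:E \is a fin_num,
    \int[mu]_x (V x * Num.max (- h x) 0)%R%:E \is a fin_num &
  \int[mu]_x (V x * h x)%R%:E =
    \int[mu]_x (V x * Num.max (h x) 0)%R%:E - \int[mu]_x (V x * Num.max (- h x) 0)%R%:E].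
Proof.
have ih : mu.-integrable setT (EFin \o (fun x => V x * h x)%R).
  apply/integrableP; split.
    by apply/measurable_EFinP; exact: measurable_funM.
  under eq_integral do rewrite /= normrM (ger0_norm (V0 _)).
  exact: hfin.
have ep : (EFin \o (fun x => V x * h x)%R)^\+ = (fun x => (V x * Num.max (h x) 0)%R%:E).
  apply/funext => x; rewrite funeposE /= -EFin_max maxr_pMr// mulr0.
  by [].
have en : (EFin \o (fun x => V x * h x)%R)^\- = (fun x => (V x * Num.max (- h x) 0)%R%:E).
  apply/funext => x; rewrite funenegE /= -EFin_max maxr_pMr// mulr0 mulrN.
  by [].
have := integrable_funepos measurableT ih; rewrite ep => ip.
have := integrable_funeneg measurableT ih; rewrite en => in_.
split => //.
- exact: integrable_fin_num.
- exact: integrable_fin_num.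
- by rewrite integralE ep en.
Qed.

End tools.
Arguments int_split {d T R} mu {V h}.

Section tools2.
Context d (Om : measurableType d) (R : realType) (P : probability Om R).

Lemma EQ_int (V h : Om -> R) (mV : measurable_fun setT V)
  (mh : measurable_fun setT h) (V0 : forall x, (0 <= V x)%R)
  (hfin : \int[P]_x (V x * `|h x|)%R%:E < +oo) :
  EQ P V h = \int[P]_x (V x * h x)%R%:E.
Proof.
have [_ fa fb ->] := int_split P mV mh V0 hfin.
rewrite /EQ; case: ifP => // /andP[/eqP ha _].
by rewrite ha in fa.
Qed.

Lemma mwrt_comp (G : set (set Om)) (h : Om -> R) (phi : R -> R)
  (mphi : measurable_fun setT phi) :
  measurable_wrt G h -> measurable_wrt G (phi \o h).
Proof.
move=> hG B mB; rewrite comp_preimage; apply: hG.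
by rewrite -[X in measurable X]setTI; exact: mphi.
Qed.

Lemma mwrt_meas' G (h : Om -> R) : G `<=` measurable -> measurable_wrt G h ->
  measurable_fun setT h.
Proof. by move=> GM hG _ B mB; rewrite setTI; apply: GM; exact: hG. Qed.

Lemma transfer (G : set (set Om)) (sG : sigma_algebra setT G)
  (GM : G `<=` measurable) (V1 V2 : Om -> R)
  (mV1 : measurable_fun setT V1) (mV2 : measurable_fun setT V2)
  (V10 : forall x, (0 <= V1 x)%R) (V20 : forall x, (0 <= V2 x)%R)
  (hfg : forall A, G A ->
     \int[P]_(x in A) (V1 x)%:E = \int[P]_(x in A) (V2 x)%:E)
  (h : Om -> R) (hG : measurable_wrt G h)
  (hfin : \int[P]_x (V2 x * `|h x|)%R%:E < +oo) :
  \int[P]_x (V1 x * `|h x|)%R%:E < +oo /\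
  \int[P]_x (V1 x * h x)%R%:E = \int[P]_x (V2 x * h x)%R%:E.
Proof.
have mh := @mwrt_meas' G h GM hG.
have ha : \int[P]_x (V1 x * `|h x|)%R%:E = \int[P]_x (V2 x * `|h x|)%R%:E.
  apply: (@sub_integral _ _ _ P G sG GM V1 V2 mV1 mV2 V10 V20 hfg
    (fun x => `|h x|)%R) => //.
  by apply: (@mwrt_comp G h (@Num.norm R R)) => //; exact: normr_measurable.
have hp : \int[P]_x (V1 x * Num.max (h x) 0)%R%:E = \int[P]_x (V2 x * Num.max (h x) 0)%R%:E.
  apply: (@sub_integral _ _ _ P G sG GM V1 V2 mV1 mV2 V10 V20 hfg
    (fun x => Num.max (h x) 0)%R) => //.
    apply: (@mwrt_comp G h (fun x => Num.max x 0)%R) => //.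
    by apply: measurable_maxr => //; exact: measurable_cst.
  by move=> x; rewrite le_max lexx orbT.
have hn : \int[P]_x (V1 x * Num.max (- h x) 0)%R%:E = \int[P]_x (V2 x * Num.max (- h x) 0)%R%:E.
  apply: (@sub_integral _ _ _ P G sG GM V1 V2 mV1 mV2 V10 V20 hfg
    (fun x => Num.max (- h x) 0)%R) => //.
    apply: (@mwrt_comp G h (fun x => Num.max (- x) 0)%R) => //.
    by apply: measurable_maxr => //; exact: oppr_measurable.
  by move=> x; rewrite le_max lexx orbT.
have h1 : \int[P]_x (V1 x * `|h x|)%R%:E < +oo by rewrite ha.
split => //.
have [_ _ _ ->] := int_split P mV1 mh V10 h1.
have [_ _ _ ->] := int_split P mV2 mh V20 hfin.
by rewrite hp hn.
Qed.


Lemma EQ_sum (M : nat) (V : Om -> R) (Xk : 'I_M -> Om -> R)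
  (mV : measurable_fun setT V) (mX : forall k, measurable_fun setT (Xk k))
  (V0 : forall x, (0 <= V x)%R)
  (hfin : forall k, \int[P]_x (V x * `|Xk k x|)%R%:E < +oo) :
  EQ P V (fun w => \sum_(k < M) Xk k w)%R =
  \sum_(k < M) \int[P]_x (V x * Xk k x)%R%:E.
Proof.
have ik k : P.-integrable setT (EFin \o (fun x => V x * Xk k x)%R).
  by have [] := int_split P mV (mX k) V0 (hfin k).
have mS : measurable_fun setT (fun w => \sum_(k < M) Xk k w)%R.
  exact: measurable_sum.
have iS : P.-integrable setT (fun x => \sum_(k < M) (EFin \o (fun x => V x * Xk k x)%R) x).
  exact: integrable_sum.
have eS : (fun x => \sum_(k < M) (EFin \o (fun x => V x * Xk k x)%R) x) =
    EFin \o (fun x => V x * \sum_(k < M) Xk k x)%R.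
  by apply/funext => x; rewrite /= mulr_sumr -sumEFin.
rewrite EQ_int//.
- rewrite -integral_sum//.
  by apply: eq_integral => x _; rewrite mulr_sumr -sumEFin.
- move: iS; rewrite eS => /integrableP[_].
  by under eq_integral do rewrite /= normrM (ger0_norm (V0 _)).
Qed.

End tools2.


Section l1s.
Context d (Om : measurableType d) (R : realType) (P : probability Om R).

Lemma L1s_fin (C : set (Om -> R)) (X : Om -> R) : L1s P C X ->
  forall Z, C Z -> density P Z -> \int[P]_x (Z x * `|X x|)%R%:E < +oo.
Proof.
case=> mX hcv Z CZ [mZ Z0 iZ].
have := hcv _ (open_ereal_lt' (ltr01 : (0 : \bar R) < 1)).
move=> [N _ hN].
have {hN} hN := hN N (leqnn N); rewrite /= in hN.
set S := [set w | (N%:R < `|X w|)%R].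
have mS : measurable S.
  have -> : S = (fun w => `|X w|)%R @^-1` `]N%:R, +oo[.
    by apply/seteqP; split => w /=; rewrite in_itv /= andbT.
  have mn : measurable_fun setT (fun w => `|X w|)%R.
    by apply: measurableT_comp => //; exact: normr_measurable.
  by rewrite -[X in measurable X]setTI; apply: mn => //; exact: measurable_itv.
have mZX : measurable_fun setT (fun x => Z x * `|X x|)%R.
  by apply: measurable_funM => //; apply: measurableT_comp => //; exact: normr_measurable.
have h1 : \int[P]_x (Z x * `|X x| * \1_S x)%R%:E < 1.
  apply: le_lt_trans hN; apply: ereal_sup_ubound => /=.
  by exists Z.
apply: (@le_lt_trans _ _ (\int[P]_x ((Z x * `|X x| * \1_S x)%R%:E + (N%:R * Z x)%R%:E))).
  apply: ge0_le_integral => //.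
  - by move=> x _; rewrite lee_fin mulr_ge0.
  - exact/measurable_EFinP.
  - apply: emeasurable_funD; apply/measurable_EFinP.
      apply: measurable_funM => //; exact: measurable_indic.
    by apply: measurable_funM => //; exact: measurable_cst.
  - move=> x _; rewrite -EFinD lee_fin indicE.
    have [xS|xS] := boolP (x \in S).
      by rewrite mulr1 lerDl mulr_ge0.
    rewrite mulr0 add0r mulrC ler_wpM2r//.
    by rewrite leNgt; apply: contra xS => h; rewrite inE.
rewrite ge0_integralD//.
- under eq_integral do rewrite EFinM.
- have -> : \int[P]_x (N%:R * Z x)%R%:E = N%:R%:E * \int[P]_x (Z x)%:E.
    under eq_integral do rewrite EFinM.
    rewrite ge0_integralZl_EFin//.
    + by move=> x _; rewrite lee_fin.
    + exact/measurable_EFinP.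
  rewrite iZ mule1 lte_add_pinfty//; last by rewrite ltry.
  by rewrite (lt_trans h1)// ltry.
- by move=> x _; rewrite lee_fin !mulr_ge0.
- apply/measurable_EFinP; apply: measurable_funM => //; exact: measurable_indic.
- by move=> x _; rewrite lee_fin mulr_ge0.
- by apply/measurable_EFinP; apply: measurable_funM => //; exact: measurable_cst.
Qed.

End l1s.

Theorem proposition3p10 (d : measure_display) (Omega : measurableType d)
  (R : realType) (P : probability Omega R)
  (u : (Omega -> R) -> \bar R) (D : set (Omega -> R))
  (M : nat) (dT : 'I_M -> measure_display)
  (T : forall m, measurableType (dT m)) (Y : forall m, Omega -> T m)
  (Xm : 'I_M -> Omega -> R) :
  coherent_utility P u ->
  D = determining_set P u ->
  (forall m, measurable_fun setT (Y m)) ->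
  independent P Y ->
  (forall m, measurable_wrt (sigma_of (Y m)) (Xm m)) ->
  (forall m, L1s P D (Xm m)) ->
  (forall m, L1s P (cond_set P D (sigma_joint Y)) (Xm m)) ->
  (forall m, P.-integrable setT (EFin \o Xm m)) ->
  (forall m, \int[P]_w (Xm m w)%:E = 0) ->
  let X := fun w => (\sum_(m < M) Xm m w)%R in
  rho_f P D X (sigma_joint Y) <=
    \sum_(m < M) rho_f P D X (sigma_of (Y m)).
Proof.
move=> _ hD mY hI hXm hL1D _ hint hE0; cbv zeta.
set X := (fun w => (\sum_(m < M) Xm m w)%R).
have sJ : sigma_algebra setT (sigma_joint Y) by exact: smallest_sigma_algebra.
have sO m : sigma_of (Y m) `<=` measurable := @sub_of _ _ _ _ _ _ mY m.
have JM : sigma_joint Y `<=` measurable.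
  apply: smallest_sub; first exact: sigma_algebra_measurable.
  by move=> A [m _ hA]; exact: (sO m _ hA).
have subJ m : sigma_of (Y m) `<=` sigma_joint Y.
  by move=> A hA; apply: sub_gen_smallest; exists m.
have mXm m : measurable_fun setT (Xm m) := @mwrt_meas _ _ _ _ _ (sO m) (hXm m).
have sigT m : sigma_of (Y m) setT.
  by exists setT => //; rewrite preimage_setT setIT.
rewrite /rho_f /u_f leeNl.
apply: le_ereal_inf_tmp => _ [W [dW [Z DZ [WG Wint WE]]] <-].
have dZ : density P Z by move: (DZ); rewrite hD => -[].
have [mZ Z0 iZ] := dZ.
have [mW W0 iW] := dW.
have iZfin : \int[P]_x (Z x)%:E < +oo by rewrite iZ ltry.
have hWm m := @cexp _ _ _ P _ _ (Y m) (mY m) Z mZ Z0 iZfin.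
have [Wm hW] := @choice _ _ (fun m V => [/\ measurable_wrt (sigma_of (Y m)) V,
    (forall x, (0 <= V x)%R) &
    forall A, sigma_of (Y m) A ->
      \int[P]_(x in A) (V x)%:E = \int[P]_(x in A) (Z x)%:E]) hWm.
have WmG m : measurable_wrt (sigma_of (Y m)) (Wm m) by case: (hW m).
have Wm0 m : forall x, (0 <= Wm m x)%R by case: (hW m).
have WmE m : forall A, sigma_of (Y m) A ->
    \int[P]_(x in A) (Wm m x)%:E = \int[P]_(x in A) (Z x)%:E by case: (hW m).
have mWm m := @mwrt_meas _ _ _ _ _ (sO m) (WmG m).
have iWm m : \int[P]_x (Wm m x)%:E = 1.
  by rewrite -iZ; exact: (WmE m _ (sigT m)).
have cWm m : cond_set P D (sigma_of (Y m)) (Wm m).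
  split; first by split.
  exists Z => //; split; [exact: WmG| |exact: WmE].
  apply/integrableP; split; first exact/measurable_EFinP.
  under eq_integral => x _ do rewrite /= ger0_norm ?Wm0//.
  by rewrite iWm ltry.
have finZ k : \int[P]_x (Z x * `|Xm k x|)%R%:E < +oo.
  exact: (@L1s_fin _ _ _ P D (Xm k) (hL1D k) Z DZ dZ).
have hJ k : measurable_wrt (sigma_joint Y) (Xm k).
  by move=> B mB; apply: subJ; exact: hXm.
have trW k := @transfer _ _ _ P (sigma_joint Y) sJ JM W Z mW mZ W0 Z0 WE
  (Xm k) (hJ k) (finZ k).
have trWm m := @transfer _ _ _ P (sigma_of (Y m)) (@sa_of _ _ _ _ _ Y m) (sO m)
  (Wm m) Z (mWm m) mZ (Wm0 m) Z0 (WmE m) (Xm m) (hXm m) (finZ m).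
have cabs k : \int[P]_x (`|Xm k x|)%R%:E = (fine (\int[P]_x (`|Xm k x|)%R%:E))%:E.
  rewrite fineK// ge0_fin_numE; last by apply: integral_ge0 => x _; rewrite lee_fin.
  by have /integrableP[_] := hint k.
have fin1 k : \int[P]_x (1 * `|Xm k x|)%R%:E < +oo.
  under eq_integral do rewrite mul1r.
  by have /integrableP[_] := hint k.
have sp k := int_split P (@measurable_cst _ _ _ _ setT (1%R : R))
  (mXm k) (fun _ => ler01) (fin1 k).
have m1 (f : Omega -> R) : \int[P]_x (1 * f x)%R%:E = \int[P]_x (f x)%:E.
  by apply: eq_integral => x _; rewrite mul1r.
have I2' (i j : 'I_M) (mk : i <> j) (h : Omega -> R)
    (hG : measurable_wrt (sigma_of (Y j)) h) (h0 : forall x, (0 <= h x)%R)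
    (hfin : \int[P]_x (h x)%:E \is a fin_num) :
    \int[P]_x (Wm i x * h x)%R%:E = \int[P]_x (h x)%:E.
  rewrite (@I2 _ _ _ P _ _ _ Y mY hI i j mk (Wm i) h (WmG i) (Wm0 i) hG h0
    (fine (\int[P]_x (h x)%:E))); last by rewrite fineK.
  by rewrite iWm mule1 fineK.
have mG k : measurable_wrt (sigma_of (Y k)) (fun x => `|Xm k x|)%R.
  by apply: (@mwrt_comp _ _ _ _ _ (@Num.norm R R)) => //; exact: normr_measurable.
have pG k : measurable_wrt (sigma_of (Y k)) (fun x => Num.max (Xm k x) 0)%R.
  apply: (@mwrt_comp _ _ _ _ _ (fun x => Num.max x 0)%R) => //.
  by apply: measurable_maxr => //; exact: measurable_cst.
have nG k : measurable_wrt (sigma_of (Y k)) (fun x => Num.max (- Xm k x) 0)%R.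
  apply: (@mwrt_comp _ _ _ _ _ (fun x => Num.max (- x) 0)%R) => //.
  by apply: measurable_maxr => //; exact: oppr_measurable.
have finWm : forall m k : 'I_M, \int[P]_x (Wm m x * `|Xm k x|)%R%:E < +oo.
  move=> m k.
  have [<-|/eqP mk] := eqVneq m k; first by case: (trWm m).
  rewrite (I2' m k mk (fun x => `|Xm k x|)%R (mG k) (fun x => normr_ge0 _)); last by rewrite cabs.
  by have /integrableP[_] := hint k.
have zWm (m k : 'I_M) : m <> k -> \int[P]_x (Wm m x * Xm k x)%R%:E = 0.
  move=> mk; have [_ _ _ ->] := int_split P (mWm m) (mXm k) (Wm0 m) (finWm m k).
  have [_ f1 f2 e] := sp k.
  rewrite !m1 hE0 in e f1 f2.
  rewrite !(I2' m k mk) //.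
  - by move=> x; rewrite le_max lexx orbT.
  - by move=> x; rewrite le_max lexx orbT.
have EQWm (m : 'I_M) : EQ P (Wm m) X = \int[P]_x (Z x * Xm m x)%R%:E.
  rewrite /X (@EQ_sum _ _ _ P M (Wm m) Xm (mWm m) mXm (Wm0 m) (finWm m)).
  rewrite (bigD1 m) //= big1 ?addr0; first by case: (trWm m).
  by move=> k km; apply: zWm; apply/eqP; rewrite eq_sym.
have EQW : EQ P W X = \sum_(m < M) \int[P]_x (Z x * Xm m x)%R%:E.
  rewrite /X (@EQ_sum _ _ _ P M W Xm mW mXm W0 (fun k => (trW k).1)).
  by apply: eq_bigr => k _; case: (trW k).
rewrite EQW leeNl -fin_num_sumeN.
  apply: lee_sum => m _; rewrite leeN2 -EQWm.
  by apply: ereal_inf_lbound; exists (Wm m).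
move=> m _; have [iZm _ _ _] := int_split P mZ (mXm m) Z0 (finZ m).
exact: integrable_fin_num.
Qed.
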